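(* Let $X \subset \mathbb{Z}^2$ and let $V_1,\dots,V_n \subset X$ be thick convex digital disks. Let $X'=\bigcup_{i=1}^n V_i$. For each $i$ let $C_i$ be a bounding curve of $V_i$, let $B_{1,i}$ be the union of the maximal horizontal and maximal vertical line segments contained in $C_i$, and let $B_{2,i}$ be the set of endpoints of maximal slanted line segments contained in $C_i$. Then $$B=(X\setminus X')\cup\bigcup_{i=1}^n (B_{1,i}\cup B_{2,i})$$ is a freezing set for $(X,c_2)$.
   Context: Adjacencies: for $x\neq y$ in $\mathbb{Z}^2$, $x,y$ are $c_1$-adjacent if they differ by 1 in exactly one coordinate and agree in the other; $c_2$-adjacent if each coordinate differs by at most 1. Write $x\leftrightarrow_\kappa y$ for $\kappa$-adjacency. A $\kappa$-path is a finite sequence of points with consecutive points equal or $\kappa$-adjacent. A function $f:(X,\kappa)\to(X,\kappa)$ is $\kappa$-continuous ($f\in C(X,\kappa)$) if $x\leftrightarrow_\kappa x'$ implies $f(x)=f(x')$ or $f(x)\leftrightarrow_\kappa f(x')$. $\mathrm{Fix}(f)=\{x: f(x)=x\}$. A set $A\subset X$ is a freezing set for $(X,\kappa)$ if every $f\in C(X,\kappa)$ with $A\subset \mathrm{Fix}(f)$ satisfies $f=\mathrm{id}_X$. A (digital) line segment is a $c_2$-connected set of collinear points of $\mathbb{Z}^2$; it is necessarily horizontal, vertical, or of slope $\pm1$ (called slanted). A $c_2$-closed curve is a $c_2$-path $s_0,\dots,s_{m-1}$ with $s_0=s_{m-1}$ and $s_i\ne s_j$ for $0<|i-j|<m-1$.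 If $S$ is a $c_2$-closed curve such that $\mathbb{Z}^2\setminus S$ has exactly two $c_1$-components, one finite and one infinite, the union $D$ of $S$ and the finite component is a digital disk, $S$ is a bounding curve of $D$, and the finite component is the interior $Int(S)$ (also written $Int(X)$). $Bd_2(X)=\{x\in X : \exists y\in\mathbb{Z}^2\setminus X,\ y\leftrightarrow_{c_2}x\}$. A digital disk $X$ is thick if for some bounding curve $S$ of $X$: (i) for every slanted segment $T$ of $Bd_2(X)$ and every non-endpoint $p\in T$ there is $c\in X$ with $c\leftrightarrow_{c_2}p$ but $c$ not $c_1$-adjacent to $p$ (i.e. $c$ is diagonally adjacent to $p$) on the interior side; (ii) if $p$ is the vertex of a $90^\circ$ interior angle $\theta$ of $S$, there is $q\in Int(X)$ such that, if $\theta$ has horizontal and vertical sides, $q\leftrightarrow_{c_2}p$ and $q$ is not $c_1$-adjacent to $p$, and if $\theta$ has slanted sides, $q\leftrightarrow_{c_1}p$; (iii) if $p$ is the vertex of a $135^\circ$ interior angle $\theta$ of $S$, there are $b,b'\in X$ in the interior of $\theta$ with $b\leftrightarrow_{c_2}p$, $b$ not $c_1$-adjacent to $p$, and $b'\leftrightarrow_{c_1}p$. A set $X\subset\mathbb{Z}^2$ is (digitally) convex if $X$ equals the set of integer points of its Euclidean convex hull. *)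

(* Defs.v *)
From Stdlib Require Import Bool ZArith Reals List Lia Lra.
Open Scope Z_scope.

Definition pt := (Z * Z)%type.
Definition pset := pt -> Prop.

Definition subset (A B : pset) : Prop := forall z, A z -> B z.

Definition c1adj (x y : pt) : Prop :=
  Z.abs (fst x - fst y) + Z.abs (snd x - snd y) = 1.
Definition c2adj (x y : pt) : Prop :=
  x <> y /\ Z.abs (fst x - fst y) <= 1 /\ Z.abs (snd x - snd y) <= 1.

Inductive conn (adj : pt -> pt -> Prop) (A : pset) : pt -> pt -> Prop :=
| conn_refl x : A x -> conn adj A x x
| conn_step x y z : conn adj A x y -> (y = z \/ adj y z) -> A z -> conn adj A x z.

Definition finite_set (A : pset) : Prop := exists l : list pt, forall z, A z -> In z l.

Definition continuous2 (X : pset) (f : pt -> pt) : Prop :=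
  (forall x, X x -> X (f x)) /\
  (forall x y, X x -> X y -> c2adj x y -> f x = f y \/ c2adj (f x) (f y)).

Definition freezing_set (X A : pset) : Prop :=
  subset A X /\
  forall f : pt -> pt, continuous2 X f -> (forall a, A a -> f a = a) ->
    forall x, X x -> f x = x.

(* c2-closed curves, given as the list s_0, ..., s_{m-1} with s_0 = s_{m-1} *)
Definition dflt : pt := (0, 0).
Definition closed_curve (s : list pt) : Prop :=
  let m := length s in
  (1 <= m)%nat /\
  nth 0 s dflt = nth (m - 1) s dflt /\
  (forall i, (i + 1 < m)%nat ->
     nth i s dflt = nth (i + 1) s dflt \/ c2adj (nth i s dflt) (nth (i + 1) s dflt)) /\
  (forall i j, (i < m)%nat -> (j < m)%nat -> (i < j)%nat -> (j - i < m - 1)%nat ->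
     nth i s dflt <> nth j s dflt).

Definition curve_set (s : list pt) : pset := fun z => In z s.
Definition compl_curve (s : list pt) : pset := fun z => ~ In z s.

Definition Int (s : list pt) : pset :=
  fun z => compl_curve s z /\ finite_set (conn c1adj (compl_curve s) z).

Definition bounding_curve (D : pset) (s : list pt) : Prop :=
  closed_curve s /\
  (exists p q, compl_curve s p /\ compl_curve s q /\
     finite_set (conn c1adj (compl_curve s) p) /\
     ~ finite_set (conn c1adj (compl_curve s) q) /\
     forall z, compl_curve s z ->
       conn c1adj (compl_curve s) p z \/ conn c1adj (compl_curve s) q z) /\
  (forall z, D z <-> (curve_set s z \/ Int s z)).

Definition digital_disk (D : pset) : Prop := exists s, bounding_curve D s.

Definition Bd2 (X : pset) : pset :=
  fun x => X x /\ exists y, ~ X y /\ c2adj y x.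

Definition collinear (T : pset) : Prop :=
  exists a b c : Z, (a <> 0 \/ b <> 0) /\
    forall p, T p -> a * fst p + b * snd p = c.
Definition c2connected (T : pset) : Prop :=
  forall p q, T p -> T q -> conn c2adj T p q.
Definition segment (T : pset) : Prop := collinear T /\ c2connected T.
Definition two_points (T : pset) : Prop := exists p q, T p /\ T q /\ p <> q.

Definition horiz_seg (T : pset) : Prop :=
  segment T /\ two_points T /\ exists c, forall p, T p -> snd p = c.
Definition vert_seg (T : pset) : Prop :=
  segment T /\ two_points T /\ exists c, forall p, T p -> fst p = c.
Definition slanted_seg (T : pset) : Prop :=
  segment T /\ two_points T /\
  ((exists c, forall p, T p -> fst p - snd p = c) \/
   (exists c, forall p, T p -> fst p + snd p = c)).

Definition endpoint (T : pset) (p : pt) : Prop :=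
  T p /\ forall q r, T q -> T r -> c2adj p q -> c2adj p r -> q = r.

Definition maximal_in (K : pset -> Prop) (C T : pset) : Prop :=
  K T /\ subset T C /\ forall T', K T' -> subset T' C -> subset T T' -> subset T' T.

Definition B1 (s : list pt) : pset := fun z =>
  exists T, (maximal_in horiz_seg (curve_set s) T \/
             maximal_in vert_seg (curve_set s) T) /\ T z.
Definition B2 (s : list pt) : pset := fun z =>
  exists T, maximal_in slanted_seg (curve_set s) T /\ endpoint T z.

(* angles of a closed curve: directions indexed 0..7 (multiples of 45 degrees) *)
Definition dir (w : pt) : Z :=
  let (a, b) := w in
  if (a =? 1) && (b =? 0) then 0 else
  if (a =? 1) && (b =? 1) then 1 else
  if (a =? 0) && (b =? 1) then 2 else
  if (a =? -1) && (b =? 1) then 3 else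
  if (a =? -1) && (b =? 0) then 4 else
  if (a =? -1) && (b =? -1) then 5 else
  if (a =? 0) && (b =? -1) then 6 else
  if (a =? 1) && (b =? -1) then 7 else 8.
Definition dvec (k : Z) : pt :=
  match k mod 8 with
  | 0 => (1, 0) | 1 => (1, 1) | 2 => (0, 1) | 3 => (-1, 1)
  | 4 => (-1, 0) | 5 => (-1, -1) | 6 => (0, -1) | _ => (1, -1)
  end.
Definition addp (p q : pt) : pt := (fst p + fst q, snd p + snd q).
Definition subp (p q : pt) : pt := (fst p - fst q, snd p - snd q).

(* twice the signed (shoelace) area of the polygon s_0 ... s_{m-1} = s_0 *)
Fixpoint area2 (l : list pt) : Z :=
  match l with
  | a :: ((b :: _) as t) => (fst a * snd b - fst b * snd a) + area2 t
  | _ => 0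
  end.
Definition ccw (s : list pt) : bool := 0 <? area2 s.

(* the vertices are s_0 .. s_{n-1}, n = m - 1, indexed cyclically *)
Definition nv (s : list pt) : nat := (length s - 1)%nat.
Definition vtx (s : list pt) (i : nat) : pt := nth i s dflt.
Definition prevv (s : list pt) (i : nat) : pt := nth ((i + nv s - 1) mod nv s) s dflt.
Definition nextv (s : list pt) (i : nat) : pt := nth ((i + 1) mod nv s) s dflt.
Definition dir_prev (s : list pt) (i : nat) : Z := dir (subp (prevv s i) (vtx s i)).
Definition dir_next (s : list pt) (i : nat) : Z := dir (subp (nextv s i) (vtx s i)).

(* interior angle at vertex i, in units of 45 degrees: the interior lies to
   the left of a counterclockwise traversal. The interior angular sector is
   swept counterclockwise from direction [angle_start] through
   [angle_steps] steps. *)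
Definition angle_steps (s : list pt) (i : nat) : Z :=
  if ccw s then (dir_prev s i - dir_next s i) mod 8
  else (dir_next s i - dir_prev s i) mod 8.
Definition angle_start (s : list pt) (i : nat) : Z :=
  if ccw s then dir_next s i else dir_prev s i.
Definition in_angle (s : list pt) (i : nat) (w : pt) : Prop :=
  exists t, 0 < t < angle_steps s i /\ w = addp (vtx s i) (dvec (angle_start s i + t)).

Definition diag_adj (x y : pt) : Prop := c2adj x y /\ ~ c1adj x y.

Definition thick (X : pset) : Prop :=
  exists s, bounding_curve X s /\
  (forall T, slanted_seg T -> subset T (Bd2 X) ->
     forall p, T p -> ~ endpoint T p ->
       exists c, X c /\ diag_adj c p /\ ~ collinear (fun z => T z \/ z = c)) /\
  (forall i, (i < nv s)%nat -> angle_steps s i = 2 ->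
     exists q, Int s q /\
       (Z.even (dir_prev s i) = true -> diag_adj q (vtx s i)) /\
       (Z.even (dir_prev s i) = false -> c1adj q (vtx s i))) /\
  (forall i, (i < nv s)%nat -> angle_steps s i = 3 ->
     exists b b', X b /\ X b' /\ in_angle s i b /\ in_angle s i b' /\
       diag_adj b (vtx s i) /\ c1adj b' (vtx s i)).

Definition IZp (p : pt) : R * R := (IZR (fst p), IZR (snd p)).
Definition in_hull (X : pset) (z : R * R) : Prop :=
  exists l : list (R * pt),
    Forall (fun wp => (0 <= fst wp)%R /\ X (snd wp)) l /\
    fold_right (fun wp acc => fst wp + acc)%R 0%R l = 1%R /\
    fold_right (fun wp acc => fst wp * IZR (fst (snd wp)) + acc)%R 0%R l = fst z /\
    fold_right (fun wp acc => fst wp * IZR (snd (snd wp)) + acc)%R 0%R l = snd z.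
Definition convex (X : pset) : Prop := forall z : pt, X z <-> in_hull X (IZp z).

(* Main.v *)
Require Import Defs.
From Stdlib Require Import ZArith List Lia Classical.
Open Scope Z_scope.

Lemma conn_last adj A x y : conn adj A x y -> A y.
Proof. intros H; destruct H; auto. Qed.
Lemma conn_one adj (A : pset) x y : A x -> A y -> (x = y \/ adj x y) -> conn adj A x y.
Proof. intros; eapply conn_step; [apply conn_refl|..]; eauto. Qed.
Lemma conn_trans adj A x y z : conn adj A x y -> conn adj A y z -> conn adj A x z.
Proof. intros H1 H2; revert H1; induction H2; intros; auto. eapply conn_step; [apply IHconn; auto|eauto|auto]. Qed.
Lemma conn_sym adj A x y : (forall a b, adj a b -> adj b a) -> conn adj A x y -> conn adj A y x.
Proof.
  intros Hs H; induction H. apply conn_refl; auto.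
  eapply conn_trans; [|exact IHconn]. apply conn_one; auto. eapply conn_last; eauto.
  destruct H0; [left; auto | right; auto].
Qed.
Lemma conn_mono adj (A A' : pset) x y : (forall z, A z -> A' z) -> conn adj A x y -> conn adj A' x y.
Proof. intros Hs H; induction H. apply conn_refl; auto. eapply conn_step; eauto. Qed.
Lemma conn_restrict adj A p u v : conn adj A p u -> conn adj A u v -> conn adj (conn adj A p) u v.
Proof.
  intros H1 H2. revert H1. induction H2; intros. apply conn_refl; auto.
  eapply conn_step; [apply IHconn; auto | eauto | ].
  eapply conn_step; [ eapply conn_trans; eauto | eauto | auto].
Qed.
Lemma c2adj_sym a b : c2adj a b -> c2adj b a.
Proof. unfold c2adj; intros [H1 H2]; split; [congruence| lia]. Qed.

Definition mv (p d : pt) (k : nat) : pt := (fst p + Z.of_nat k * fst d, snd p + Z.of_nat k * snd d).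
Lemma mv0 p d : mv p d 0 = p.
Proof. unfold mv; destruct p; simpl; f_equal; lia. Qed.

Lemma avoid_list (l : list pt) p d : (fst d <> 0 \/ snd d <> 0) -> exists k, ~ In (mv p d k) l.
Proof.
  intros Hd.
  set (bnd := fold_right (fun z acc => Z.abs (fst z - fst p) + Z.abs (snd z - snd p) + acc) 0 l).
  assert (Hnn: 0 <= bnd). { subst bnd; clear; induction l; simpl; lia. }
  assert (Hb: forall z, In z l -> Z.abs (fst z - fst p) + Z.abs (snd z - snd p) <= bnd).
  { subst bnd. clear Hnn. induction l as [|a l IH]; simpl; intros z Hz; [contradiction|].
    assert (0 <= fold_right (fun z acc => Z.abs (fst z - fst p) + Z.abs (snd z - snd p) + acc) 0 l)
      by (clear; induction l; simpl; lia).
    destruct Hz as [->|Hz]; [lia|]. specialize (IH z Hz); lia. }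
  exists (S (Z.to_nat bnd)). intro H; apply Hb in H; unfold mv in H; cbn [fst snd] in H.
  set (K := Z.of_nat (S (Z.to_nat bnd))) in *.
  assert (HK: K = bnd + 1) by (subst K; lia).
  assert (E1: Z.abs (fst p + K * fst d - fst p) = K * Z.abs (fst d)).
  { replace (fst p + K * fst d - fst p) with (K * fst d) by ring. rewrite Z.abs_mul, (Z.abs_eq K); lia. }
  assert (E2: Z.abs (snd p + K * snd d - snd p) = K * Z.abs (snd d)).
  { replace (snd p + K * snd d - snd p) with (K * snd d) by ring. rewrite Z.abs_mul, (Z.abs_eq K); lia. }
  rewrite E1, E2 in H. destruct Hd; nia.
Qed.

Lemma first_fail (P : nat -> Prop) : P 0%nat -> forall M, ~ P M ->
  exists s, (forall k, (k <= s)%nat -> P k) /\ ~ P (S s).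
Proof.
  intros H0 M HM.
  assert (G: forall N, (forall k, (k <= N)%nat -> P k) \/
                      exists s, (forall k, (k <= s)%nat -> P k) /\ ~ P (S s)).
  { induction N as [|N IH].
    - left; intros k Hk; assert (k = 0%nat) by lia; subst; auto.
    - destruct IH as [IH|IH]; [|right; auto].
      destruct (classic (P (S N))) as [Hp|Hp].
      + left; intros k Hk. destruct (Nat.eq_dec k (S N)); [subst; auto| apply IH; lia].
      + right; exists N; auto. }
  destruct (G M) as [G1|G1]; auto. exfalso; apply HM, G1; lia.
Qed.

Lemma lip X f p d s : continuous2 X f -> Z.abs (fst d) <= 1 -> Z.abs (snd d) <= 1 -> d <> (0,0) ->
  (forall k, (k <= s)%nat -> X (mv p d k)) ->
  Z.abs (fst (f p) - fst (f (mv p d s))) <= Z.of_nat s /\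
  Z.abs (snd (f p) - snd (f (mv p d s))) <= Z.of_nat s.
Proof.
  intros [_ Hc] H1 H2 H3 HX. induction s as [|s IH].
  - rewrite mv0; simpl; lia.
  - assert (IH' := IH (fun k Hk => HX k (ltac:(lia)))).
    assert (Ha: c2adj (mv p d s) (mv p d (S s))).
    { unfold c2adj, mv; cbn [fst snd]. rewrite Nat2Z.inj_succ, !Z.mul_succ_l. split; [|lia].
      intro E. apply H3. destruct d as [a b]; simpl in *. injection E; intros. f_equal; lia. }
    destruct (Hc _ _ (HX s ltac:(lia)) (HX (S s) ltac:(lia)) Ha) as [E|E].
    + rewrite <- E. rewrite Nat2Z.inj_succ; lia.
    + unfold c2adj in E; rewrite Nat2Z.inj_succ; lia.
Qed.

Lemma curve_nb s p : closed_curve s -> (3 <= length s)%nat -> In p s ->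
  exists r, In r s /\ c2adj p r.
Proof.
  intros (Hm & H0 & Hadj & Hd) Hlen Hin.
  destruct (In_nth s p dflt Hin) as [i [Hi Hp]].
  destruct (Nat.lt_ge_cases (i+1) (length s)) as [H|H].
  - exists (nth (i+1) s dflt). split. apply nth_In; lia.
    destruct (Hadj i H) as [E|E]; [|subst; auto]. exfalso.
    apply (Hd i (i+1)%nat); try lia; auto.
  - assert (i = length s - 1)%nat by lia. subst i.
    exists (nth 1 s dflt). split. apply nth_In; lia.
    rewrite <- Hp, <- H0.
    destruct (Hadj 0%nat ltac:(lia)) as [E|E]; auto. exfalso.
    apply (Hd 0%nat 1%nat); try lia; auto.
Qed.

Lemma not_degen D s : bounding_curve D s -> (3 <= length s)%nat.
Proof.
  intros [Hc [(p & q & Hp & Hq & Hfin & _ & _) _]].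
  destruct (Nat.lt_ge_cases (length s) 3) as [Hl|]; auto. exfalso.
  assert (Ha: exists a, forall z, In z s -> z = a).
  { destruct Hc as (Hm & H0 & _). destruct s as [|a [|b [|c t]]]; simpl in *; try lia.
    - exists a; intros z [->|[]]; auto.
    - exists a; intros z [->|[->|[]]]; auto. }
  destruct Ha as [a Ha].
  destruct Hfin as [l Hl'].
  assert (Hc' : forall z, z <> a -> compl_curve s z). { intros z Hz Hin; apply Hz, Ha, Hin. }
  assert (Hp0: exists p0, conn c1adj (compl_curve s) p p0 /\ snd p0 <> snd a).
  { destruct (Z.eq_dec (snd p) (snd a)) as [e|e].
    - exists (fst p, snd p + 1). split; [|simpl; lia]. apply conn_one; auto.
      apply Hc'. intro E; rewrite <- E in e; simpl in e; lia.
      right. unfold c1adj; simpl; lia.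
    - exists p; split; [apply conn_refl|]; auto. }
  destruct Hp0 as [p0 [Hpp Hy]].
  assert (Hall: forall k, conn c1adj (compl_curve s) p (mv p0 (1,0) k)).
  { induction k. rewrite mv0; auto. eapply conn_step; [exact IHk| right | ].
    unfold c1adj, mv; cbn [fst snd]; rewrite Nat2Z.inj_succ; lia.
    apply Hc'. intro E. apply Hy. rewrite <- E. unfold mv; cbn [fst snd]. lia. }
  destruct (avoid_list l p0 (1,0)) as [k Hk]. simpl; lia. apply Hk, Hl', Hall.
Qed.

Lemma comp_props (A : pset) p q : A p -> A q -> c2adj p q ->
  c2connected (conn c2adj A p) /\ two_points (conn c2adj A p) /\ subset (conn c2adj A p) A /\
  (forall T', c2connected T' -> T' p -> subset T' A -> subset T' (conn c2adj A p)).
Proof.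
  intros Hp Hq Hpq. split; [|split; [|split]].
  - intros u v Hu Hv. apply conn_restrict. exact Hu.
    eapply conn_trans; [apply conn_sym; [exact c2adj_sym| exact Hu]| exact Hv].
  - exists p, q. split; [apply conn_refl; auto|]. split; [apply conn_one; auto|].
    destruct Hpq; auto.
  - intros z Hz; eapply conn_last; eauto.
  - intros T' HT' Hp' Hs z Hz. exact (conn_mono _ _ _ _ _ Hs (HT' p z Hp' Hz)).
Qed.

Lemma B1_of s p r : In p s -> In r s -> c2adj p r -> (fst r = fst p \/ snd r = snd p) -> B1 s p.
Proof.
  intros Hp Hr Hpr [E|E].
  - set (A := fun z => In z s /\ fst z = fst p).
    assert (HA: forall z, In z s -> fst z = fst p -> A z) by (intros; split; auto).
    destruct (comp_props A p r (HA p Hp eq_refl) (HA r Hr E) Hpr) as (Hc & Ht & Hs & Hm).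
    unfold B1. exists (conn c2adj A p). split; [right|apply conn_refl; apply HA; auto].
    split; [|split].
    + split; [split|split; auto].
      * exists 1, 0, (fst p). split; [left; lia|]. intros z Hz; apply Hs in Hz; destruct Hz; lia.
      * exact Hc.
      * exists (fst p); intros z Hz; apply Hs in Hz; destruct Hz; auto.
    + intros z Hz; apply Hs in Hz; destruct Hz; auto.
    + intros T' [[_ HcT'] [_ [c Hcst]]] Hsub HTT'. apply Hm; auto.
      apply HTT', conn_refl; apply HA; auto.
      intros z Hz; apply HA; [apply Hsub; auto|].
      rewrite (Hcst z Hz). symmetry. apply Hcst, HTT', conn_refl; apply HA; auto.
  - set (A := fun z => In z s /\ snd z = snd p).
    assert (HA: forall z, In z s -> snd z = snd p -> A z) by (intros; split; auto).
    destruct (comp_props A p r (HA p Hp eq_refl) (HA r Hr E) Hpr) as (Hc & Ht & Hs & Hm).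
    unfold B1. exists (conn c2adj A p). split; [left|apply conn_refl; apply HA; auto].
    split; [|split].
    + split; [split|split; auto].
      * exists 0, 1, (snd p). split; [right; lia|]. intros z Hz; apply Hs in Hz; destruct Hz; lia.
      * exact Hc.
      * exists (snd p); intros z Hz; apply Hs in Hz; destruct Hz; auto.
    + intros z Hz; apply Hs in Hz; destruct Hz; auto.
    + intros T' [[_ HcT'] [_ [c Hcst]]] Hsub HTT'. apply Hm; auto.
      apply HTT', conn_refl; apply HA; auto.
      intros z Hz; apply HA; [apply Hsub; auto|].
      rewrite (Hcst z Hz). symmetry. apply Hcst, HTT', conn_refl; apply HA; auto.
Qed.

Lemma B2_end s p q e se : In p s -> In q s -> c2adj p q ->
  snd e * fst q - fst e * snd q = snd e * fst p - fst e * snd p ->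
  (fst e = 1 \/ fst e = -1) -> (snd e = 1 \/ snd e = -1) ->
  (forall k, (k <= se)%nat -> In (mv p e k) s) -> ~ In (mv p e (S se)) s -> B2 s (mv p e se).
Proof.
  destruct e as [a b]; cbn [fst snd].
  intros Hp Hq Hpq Hql Ha Hb Hrun Hnot.
  set (A := fun z => In z s /\ b * fst z - a * snd z = b * fst p - a * snd p).
  assert (HA: forall z, In z s -> b * fst z - a * snd z = b * fst p - a * snd p -> A z)
    by (intros; split; auto).
  destruct (comp_props A p q (HA p Hp eq_refl) (HA q Hq Hql) Hpq) as (Hc & Ht & Hs & Hm).
  assert (Hr: forall k, (k <= se)%nat -> conn c2adj A p (mv p (a,b) k)).
  { induction k; intros Hk.
    - rewrite mv0; apply conn_refl, HA; auto.
    - eapply conn_step; [apply IHk; lia| right |].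
      + unfold c2adj, mv; cbn [fst snd]. rewrite Nat2Z.inj_succ, !Z.mul_succ_l.
        split; [|lia]. intro E; injection E; lia.
      + apply HA; [apply Hrun; lia|]. unfold mv; cbn [fst snd].
        rewrite Nat2Z.inj_succ, !Z.mul_succ_l. lia. }
  assert (Hpq': fst p <> fst q \/ snd p <> snd q).
  { destruct (Z.eq_dec (fst p) (fst q)); [|left; auto].
    destruct (Z.eq_dec (snd p) (snd q)); [|right; auto].
    exfalso. destruct Hpq as [Hne _]. apply Hne. destruct p, q; cbn in *; f_equal; auto. }
  unfold B2. exists (conn c2adj A p). split.
  - split; [|split].
    + split; [split|split; auto].
      * exists b, (-a), (b * fst p - a * snd p). split; [left; lia|].
        intros z Hz; apply Hs in Hz; destruct Hz; lia.
      * exact Hc.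
      * destruct Ha as [Ha|Ha]; destruct Hb as [Hb|Hb]; subst a b;
          [left; exists (fst p - snd p) | right; exists (fst p + snd p)
          | right; exists (fst p + snd p) | left; exists (fst p - snd p)];
          intros z Hz; apply Hs in Hz; destruct Hz; lia.
    + intros z Hz; apply Hs in Hz; destruct Hz; auto.
    + intros T' [[_ HcT'] [_ Hcst]] Hsub HTT'.
      assert (Tp: T' p) by (apply HTT', conn_refl, HA; auto).
      assert (Tq: T' q) by (apply HTT', conn_one; [apply HA; auto|apply HA; auto| right; auto]).
      apply Hm; auto.
      intros z Hz; apply HA; [apply Hsub; auto|].
      destruct Hcst as [[c Hc']|[c Hc']];
        pose proof (Hc' p Tp); pose proof (Hc' q Tq); pose proof (Hc' z Hz);
        destruct Ha as [Ha|Ha]; destruct Hb as [Hb|Hb]; subst a b; lia.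
  - split; [apply Hr; lia|].
    assert (key: forall w, conn c2adj A p w -> c2adj (mv p (a,b) se) w ->
                   w = (fst (mv p (a,b) se) - a, snd (mv p (a,b) se) - b)).
    { intros w Hw Hadj. apply Hs in Hw. destruct Hw as [Hwin Hwl].
      destruct w as [x y]. unfold mv, c2adj in *; cbn [fst snd] in *.
      destruct Hadj as [Hne Habs].
      rewrite Nat2Z.inj_succ, !Z.mul_succ_l in Hnot.
      set (K := Z.of_nat se) in *.
      assert (x = fst p + K*a + a /\ y = snd p + K*b + b \/ x = fst p + K*a - a /\ y = snd p + K*b - b
              \/ (x = fst p + K*a /\ y = snd p + K*b)) as Hcase
        by (destruct Ha as [Ha|Ha]; destruct Hb as [Hb|Hb]; subst a b; lia).
      destruct Hcase as [[H1 H2]|[[H1 H2]|[H1 H2]]].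
      - exfalso. apply Hnot.
        replace (fst p + (K * a + a), snd p + (K * b + b)) with (x, y) by (f_equal; lia). auto.
      - f_equal; lia.
      - exfalso; apply Hne; f_equal; lia. }
    intros q1 r1 Hq1 Hr1 Hq1a Hr1a. rewrite (key q1 Hq1 Hq1a), (key r1 Hr1 Hr1a). auto.
Qed.

Lemma slanted_fixed X f s p d : continuous2 X f -> (forall z, In z s -> X z) ->
  (forall z, B2 s z -> f z = z) -> In p s -> In (mv p d 1) s ->
  (fst d = 1 \/ fst d = -1) -> (snd d = 1 \/ snd d = -1) -> f p = p.
Proof.
  intros Hf HX HB2 Hp Hq Ha Hb.
  set (q := mv p d 1) in *.
  assert (Hpq: c2adj p q).
  { subst q; unfold c2adj, mv; cbn [fst snd]. split; [|lia].
    intro E. assert (E1 := f_equal fst E); assert (E2 := f_equal snd E); cbn [fst snd] in E1, E2. lia. }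
  assert (Hdir: forall e, (fst e = 1 \/ fst e = -1) -> (snd e = 1 \/ snd e = -1) ->
     snd e * fst q - fst e * snd q = snd e * fst p - fst e * snd p ->
     exists N:nat, Z.abs (fst (f p) - (fst p + Z.of_nat N * fst e)) <= Z.of_nat N /\
                   Z.abs (snd (f p) - (snd p + Z.of_nat N * snd e)) <= Z.of_nat N).
  { intros e He1 He2 Hl.
    destruct (avoid_list s p e) as [M HM]; [lia|].
    destruct (first_fail (fun k => In (mv p e k) s)) with M as [se [Hrun Hnot]];
      [rewrite mv0; auto | auto |].
    assert (Hfe: f (mv p e se) = mv p e se) by (apply HB2; eapply B2_end; eauto).
    destruct (lip X f p e se Hf) as [L1 L2]; try lia.
    { intro E; rewrite E in He1; cbn in He1; lia. }
    { intros k Hk; apply HX, Hrun; auto. }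
    rewrite Hfe in L1, L2. exists se. unfold mv in L1, L2; cbn [fst snd] in L1, L2. lia. }
  destruct (Hdir d Ha Hb) as [N1 [A1 B1']].
  { subst q; unfold mv; cbn [fst snd]. lia. }
  destruct (Hdir (- fst d, - snd d)) as [N2 [A2 B2']]; cbn [fst snd]; try lia.
  { subst q; unfold mv; cbn [fst snd]. lia. }
  destruct (f p) as [u v] eqn:Efp. destruct p as [x y]. cbn [fst snd] in *.
  f_equal; destruct Ha as [Ha|Ha]; destruct Hb as [Hb|Hb]; rewrite Ha, Hb in *; lia.
Qed.

Lemma int_dir X f s y d : continuous2 X f -> (forall z, In z s -> X z) ->
  (forall z, Int s z -> X z) -> (forall z, In z s -> f z = z) -> Int s y ->
  Z.abs (fst d) + Z.abs (snd d) = 1 ->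
  exists N:nat, Z.abs (fst (f y) - (fst y + Z.of_nat N * fst d)) <= Z.of_nat N /\
                Z.abs (snd (f y) - (snd y + Z.of_nat N * snd d)) <= Z.of_nat N.
Proof.
  intros Hf HXs HXi Hfs [Hy [l Hl]] Hd.
  destruct (avoid_list l y d) as [M HM]; [lia|].
  destruct (first_fail (fun k => conn c1adj (compl_curve s) y (mv y d k))) with M as [se [Hrun Hnot]].
  { rewrite mv0; apply conn_refl; auto. }
  { intro H; apply HM, Hl, H. }
  assert (Hstep: forall k, c1adj (mv y d k) (mv y d (S k))).
  { intros k; unfold c1adj, mv; cbn [fst snd]. rewrite Nat2Z.inj_succ, !Z.mul_succ_l. lia. }
  assert (Hin: In (mv y d (S se)) s).
  { destruct (classic (In (mv y d (S se)) s)) as [H|H]; auto. exfalso; apply Hnot.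
    eapply conn_step; [apply (Hrun se); lia| right; apply Hstep| exact H]. }
  assert (Hfe := Hfs _ Hin).
  destruct (lip X f y d (S se) Hf) as [L1 L2]; try lia.
  { intro E; rewrite E in Hd; cbn in Hd; lia. }
  { intros k Hk. destruct (Nat.eq_dec k (S se)) as [->|Hne]; [apply HXs; auto|].
    apply HXi. assert (Hc := Hrun k ltac:(lia)). split; [eapply conn_last; eauto|].
    exists l. intros u Hu. apply Hl. eapply conn_trans; eauto. }
  rewrite Hfe in L1, L2. exists (S se). unfold mv in L1, L2; cbn [fst snd] in L1, L2. lia.
Qed.

Lemma int_fixed X f s y : continuous2 X f -> (forall z, In z s -> X z) ->
  (forall z, Int s z -> X z) -> (forall z, In z s -> f z = z) -> Int s y -> f y = y.
Proof.
  intros.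
  destruct (int_dir X f s y (1,0)) as [N1 [A1 _]]; auto.
  destruct (int_dir X f s y (-1,0)) as [N2 [A2 _]]; auto.
  destruct (int_dir X f s y (0,1)) as [N3 [_ A3]]; auto.
  destruct (int_dir X f s y (0,-1)) as [N4 [_ A4]]; auto.
  cbn [fst snd] in *.
  destruct (f y) as [u v]; destruct y as [a b]; cbn [fst snd] in *. f_equal; lia.
Qed.

Lemma curve_fixed X f s : continuous2 X f -> (forall z, In z s -> X z) -> closed_curve s ->
  (3 <= length s)%nat -> (forall z, B1 s z -> f z = z) -> (forall z, B2 s z -> f z = z) ->
  forall p, In p s -> f p = p.
Proof.
  intros Hf HX Hc Hl HB1 HB2 p Hp.
  destruct (curve_nb s p Hc Hl Hp) as [r [Hr Hpr]].
  destruct (classic (fst r = fst p \/ snd r = snd p)) as [H|H].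
  - apply HB1; eapply B1_of; eauto.
  - apply (slanted_fixed X f s p (fst r - fst p, snd r - snd p)); auto.
    + replace (mv p (fst r - fst p, snd r - snd p) 1) with r; auto.
      unfold mv; destruct r, p; cbn [fst snd] in *; f_equal; lia.
    + cbn [fst snd]; unfold c2adj in Hpr; lia.
    + cbn [fst snd]; unfold c2adj in Hpr; lia.
Qed.
Close Scope Z_scope.

Theorem mainTheorem5 (X : pset) (n : nat) (V : nat -> pset) (C : nat -> list pt) :
  (forall i, (i < n)%nat -> subset (V i) X) ->
  (forall i, (i < n)%nat -> digital_disk (V i) /\ thick (V i) /\ convex (V i)) ->
  (forall i, (i < n)%nat -> bounding_curve (V i) (C i)) ->
  freezing_set X
    (fun z => (X z /\ ~ (exists i, (i < n)%nat /\ V i z)) \/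
              (exists i, (i < n)%nat /\ ((B1 (C i) z) \/ (B2 (C i) z)))).
Proof.
  intros HVX _ Hbc. split.
  - intros z [[Hz _]|[i [Hi [H1|H2]]]]; auto.
    + destruct H1 as [T [[HT|HT] Tz]]; destruct HT as [_ [Hsub _]];
        apply (HVX i Hi); apply (proj2 (proj2 (proj2 (Hbc i Hi)) z)); left; apply Hsub, Tz.
    + destruct H2 as [T [[_ [Hsub _]] [Tz _]]].
      apply (HVX i Hi); apply (proj2 (proj2 (proj2 (Hbc i Hi)) z)); left; apply Hsub, Tz.
  - intros f Hf Hfix x Hx.
    destruct (classic (exists i, (i < n)%nat /\ V i x)) as [[i [Hi HVi]]|Hno];
      [| apply Hfix; left; auto].
    pose proof (Hbc i Hi) as Hb. destruct Hb as [Hcc [_ Hiff]].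
    assert (Hlen := not_degen _ _ (Hbc i Hi)).
    assert (HXs: forall z, In z (C i) -> X z)
      by (intros z Hz; apply (HVX i Hi), Hiff; left; exact Hz).
    assert (HXi: forall z, Int (C i) z -> X z)
      by (intros z Hz; apply (HVX i Hi), Hiff; right; exact Hz).
    assert (Hcur: forall z, In z (C i) -> f z = z).
    { apply (curve_fixed X f (C i) Hf HXs Hcc Hlen).
      - intros z Hz; apply Hfix; right; exists i; auto.
      - intros z Hz; apply Hfix; right; exists i; auto. }
    apply Hiff in HVi. destruct HVi as [Hc|HI]; [apply Hcur; exact Hc|].
    apply (int_fixed X f (C i)); auto.
Qed.
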